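(* Let $f\in\mathcal{K}$ have radius of convergence $R>0$, with Khinchin family $(X_t)$ and fulcrum $F$, and let $Z$ be a standard normal random variable. Fix an integer $n\ge3$. Then $$\lim_{t\uparrow R}\mathbf{E}(\breve{X}_t^j)=\mathbf{E}(Z^j)\quad\text{for every }3\le j\le n$$ if and only if $$\lim_{s\uparrow\ln R}\frac{F^{(j)}(s)}{F''(s)^{j/2}}=0\quad\text{for every }3\le j\le n.$$
   Context: The class $\mathcal{K}$ consists of non-constant power series $f(z)=\sum_{n\ge0}a_nz^n$ with radius of convergence $R\in(0,+\infty]$, with $a_n\ge 0$ for all $n$ and $a_0>0$. For $t\in(0,R)$, $X_t$ is the random variable with $\mathbf{P}(X_t=n)=a_nt^n/f(t)$, $n\ge0$. Write $m_f(t)=\mathbf{E}(X_t)=tf'(t)/f(t)$, $\sigma_f^2(t)=\mathbf{V}(X_t)=t\,m_f'(t)>0$, and $\breve{X}_t=(X_t-m_f(t))/\sigma_f(t)$. The fulcrum of $f$ is $F(s)=\ln f(e^s)$ for real $s<\ln R$ (with $\ln R=+\infty$ if $R=+\infty$); $F''(s)=\sigma_f^2(e^s)$. Limits $t\uparrow R$ mean $t\to+\infty$ when $R=+\infty$. *)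

(* Defs.v *)
From Stdlib Require Import Reals.
From Coquelicot Require Import Coquelicot.
Open Scope R_scope.

(* A power series f(z) = sum a_n z^n is represented by its coefficient
   sequence a : nat -> R; f t = PSeries a t, radius R = CV_radius a. *)

Definition khin_prob (a : nat -> R) (t : R) (k : nat) : R :=
  a k * t ^ k / PSeries a t.

Definition khin_mean (a : nat -> R) (t : R) : R :=
  Series (fun k => INR k * khin_prob a t k).

Definition khin_var (a : nat -> R) (t : R) : R :=
  Series (fun k => (INR k - khin_mean a t) ^ 2 * khin_prob a t k).

Definition khin_sigma (a : nat -> R) (t : R) : R := sqrt (khin_var a t).

Definition khin_norm_moment (a : nat -> R) (t : R) (j : nat) : R :=
  Series (fun k => ((INR k - khin_mean a t) / khin_sigma a t) ^ j * khin_prob a t k).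

Definition fulcrum (a : nat -> R) (s : R) : R := ln (PSeries a (exp s)).

Definition normal_moment (j : nat) : R :=
  RInt_gen (fun x => x ^ j * exp (- x ^ 2 / 2) / sqrt (2 * PI))
    (Rbar_locally m_infty) (Rbar_locally p_infty).

Definition left_to (L : Rbar) : (R -> Prop) -> Prop :=
  match L with
  | Finite r => at_left r
  | p_infty => Rbar_locally p_infty
  | m_infty => Rbar_locally m_infty
  end.

Definition Rbar_ln (L : Rbar) : Rbar :=
  match L with
  | Finite r => Finite (ln r)
  | p_infty => p_infty
  | m_infty => m_infty
  end.

(* Main.v *)
Require Import Defs.
From Stdlib Require Import Reals Lra Lia.
From Coquelicot Require Import Coquelicot.
Open Scope R_scope.

Fixpoint sm (f : nat -> R) (n : nat) : R :=
  match n with O => 0 | S k => sm f k + f k end.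

Lemma sm_ext f g n : (forall i, (i < n)%nat -> f i = g i) -> sm f n = sm g n.
Proof.
  induction n; simpl; intros H; auto.
  rewrite IHn; [rewrite H; auto|intros; apply H; lia].
Qed.

Lemma sm_plus f g n : sm (fun i => f i + g i) n = sm f n + sm g n.
Proof. induction n; simpl; [lra|rewrite IHn; lra]. Qed.

Lemma sm_minus f g n : sm (fun i => f i - g i) n = sm f n - sm g n.
Proof. induction n; simpl; [lra|rewrite IHn; lra]. Qed.

Lemma sm_scal c f n : sm (fun i => c * f i) n = c * sm f n.
Proof. induction n; simpl; [lra|rewrite IHn; lra]. Qed.

Lemma sm_zero n : sm (fun _ => 0) n = 0.
Proof. induction n; simpl; [lra|rewrite IHn; lra]. Qed.

Lemma sm_shift f n : sm f (S n) = f O + sm (fun i => f (S i)) n.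
Proof. induction n; simpl in *; [lra|rewrite IHn; lra]. Qed.

Lemma sm_single f n i0 : (i0 < n)%nat -> (forall i, (i < n)%nat -> i <> i0 -> f i = 0) ->
  sm f n = f i0.
Proof.
  induction n; intros Hi H; [lia|simpl].
  destruct (Nat.eq_dec i0 n) as [->|Hne].
  - rewrite (sm_ext f (fun _ => 0)); [rewrite sm_zero; lra|].
    intros; apply H; lia.
  - rewrite IHn; [rewrite (H n); [lra|lia|auto]|lia|intros; apply H; lia].
Qed.

Lemma sm_derive (f : nat -> R -> R) (df : nat -> R) x n :
  (forall i, (i < n)%nat -> is_derive (f i) x (df i)) ->
  is_derive (fun s => sm (fun i => f i s) n) x (sm df n).
Proof.
  induction n; intros H; simpl.
  - apply (is_derive_const (K:=R_AbsRing) (V:=R_NormedModule) 0 x).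
  - apply (is_derive_plus (K:=R_AbsRing) (V:=R_NormedModule)).
    + apply IHn; intros; apply H; lia.
    + apply H; lia.
Qed.

Lemma derive_uniq (f : R -> R) (x l1 l2 : R) : is_derive f x l1 -> is_derive f x l2 -> l1 = l2.
Proof. intros H1 H2. apply is_derive_unique in H1. apply is_derive_unique in H2. congruence. Qed.

Lemma is_derive_mult' (f g : R -> R) x df dg :
  is_derive f x df -> is_derive g x dg -> is_derive (fun s => f s * g s) x (df * g x + f x * dg).
Proof. intros H1 H2. apply (is_derive_mult f g x df dg H1 H2). intros; apply Rmult_comm. Qed.

Lemma is_derive_minus' (f g : R -> R) x df dg :
  is_derive f x df -> is_derive g x dg -> is_derive (fun s => f s - g s) x (df - dg).
Proof. intros H1 H2. apply (is_derive_minus f g x df dg H1 H2). Qed.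

Lemma is_derive_plus' (f g : R -> R) x df dg :
  is_derive f x df -> is_derive g x dg -> is_derive (fun s => f s + g s) x (df + dg).
Proof. intros H1 H2. apply (is_derive_plus f g x df dg H1 H2). Qed.

Lemma pascal_sum p (h : nat -> R) :
  sm (fun i => Binomial.C p i * (h (S i) + h i)) (S p) =
  sm (fun i => Binomial.C (S p) i * h i) (S (S p)).
Proof.
  rewrite (sm_ext _ (fun i => Binomial.C p i * h (S i) + Binomial.C p i * h i))
    by (intros; ring).
  rewrite sm_plus.
  rewrite (sm_shift (fun i => Binomial.C p i * h i)).
  rewrite (sm_shift (fun i => Binomial.C (S p) i * h i)).
  simpl sm at 1. simpl sm at 3.
  rewrite !C_n_0, C_n_n, C_n_n.
  rewrite (sm_ext (fun i => Binomial.C (S p) (S i) * h (S i))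
     (fun i => Binomial.C p i * h (S i) + Binomial.C p (S i) * h (S i))).
  2:{ intros i Hi. rewrite <- pascal by lia. ring. }
  rewrite sm_plus. ring.
Qed.

Section Cumul.
Variable D : R -> Prop.
Hypothesis Dopen : forall s, D s -> locally s D.
Variable M : nat -> R -> R.
Variable K : nat -> R -> R.
Hypothesis M0 : forall s, D s -> M O s = 1.
Hypothesis Mder : forall j s, D s -> is_derive (M j) s (M (S j) s - M 1 s * M j s).
Hypothesis K1 : forall s, D s -> K 1%nat s = M 1%nat s.
Hypothesis Kder : forall j s, D s -> ex_derive (K (S j)) s ->
  is_derive (K (S j)) s (K (S (S j)) s).

Definition ident p s := M (S p) s = sm (fun i => Binomial.C p i * K (S i) s * M (p - i)%nat s) (S p).

Lemma ident_alt p s : D s -> ident p s ->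
  K (S p) s = M (S p) s - sm (fun i => Binomial.C p i * K (S i) s * M (p - i)%nat s) p.
Proof.
  intros Hs H. unfold ident in H. rewrite H. simpl. rewrite C_n_n, Nat.sub_diag, M0 by auto. ring.
Qed.

Lemma cumul_main p : forall s, D s -> ident p s /\
  (forall i, (i <= p)%nat -> is_derive (K (S i)) s (K (S (S i)) s)).
Proof.
  induction p; intros s Hs.
  - split.
    + unfold ident. simpl. rewrite K1, M0, C_n_0 by auto. ring.
    + intros i Hi. assert (i = O) by lia. subst. apply Kder; auto.
      exists (M 2%nat s - M 1%nat s * M 1%nat s).
      apply is_derive_ext_loc with (M 1%nat); [|apply Mder; auto].
      generalize (Dopen s Hs). apply filter_imp. intros; symmetry; apply K1; auto.
  - assert (Hid : forall s, D s -> ident (S p) s).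
    { clear s Hs. intros s Hs. unfold ident.
      set (h := fun i => K (S i) s * M (S p - i)%nat s).
      assert (HD1 : is_derive (M (S p)) s (M (S (S p)) s - M 1%nat s * M (S p) s)) by (apply Mder; auto).
      assert (HD2 : is_derive (fun s' => sm (fun i => Binomial.C p i * K (S i) s' * M (p - i)%nat s') (S p)) s
         (sm (fun i => Binomial.C p i * ((K (S (S i)) s * M (p-i)%nat s) +
              K (S i) s * (M (S (p - i)) s - M 1%nat s * M (p - i)%nat s))) (S p))).
      { apply sm_derive. intros i Hi.
        replace (Binomial.C p i * (K (S (S i)) s * M (p - i)%nat s +
                K (S i) s * (M (S (p - i)) s - M 1%nat s * M (p - i)%nat s)))
        with (0 * (K (S i) s * M (p-i)%nat s) + Binomial.C p i * ((K (S (S i)) s * M (p - i)%nat s +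
                K (S i) s * (M (S (p - i)) s - M 1%nat s * M (p - i)%nat s)))) by ring.
        assert (E : forall s', Binomial.C p i * K (S i) s' * M (p - i)%nat s' =
                 Binomial.C p i * (K (S i) s' * M (p - i)%nat s')) by (intros; ring).
        apply (is_derive_ext (fun s' => Binomial.C p i * (K (S i) s' * M (p - i)%nat s'))); [|]. { intros t. simpl. ring. }
        apply is_derive_mult' with (f := fun _ => Binomial.C p i) (g := fun s' => K (S i) s' * M (p - i)%nat s').
        - apply (is_derive_const (K:=R_AbsRing) (V:=R_NormedModule)).
        - apply is_derive_mult'.
          + apply (proj2 (IHp s Hs)); lia.
          + apply Mder; auto. }
      assert (HD2' : is_derive (M (S p)) s
         (sm (fun i => Binomial.C p i * ((K (S (S i)) s * M (p-i)%nat s) +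
              K (S i) s * (M (S (p - i)) s - M 1%nat s * M (p - i)%nat s))) (S p))).
      { apply is_derive_ext_loc with (2 := HD2).
        generalize (Dopen s Hs). apply filter_imp. intros x Hx. symmetry. apply (proj1 (IHp x Hx)). }
      pose proof (derive_uniq _ _ _ _ HD1 HD2') as E.
      rewrite (sm_ext _ (fun i => Binomial.C p i * (h (S i) + h i) - M 1%nat s * (Binomial.C p i * K (S i) s * M (p-i)%nat s))) in E.
      2:{ intros i Hi. unfold h. replace (S p - S i)%nat with (p - i)%nat by lia.
          replace (S p - i)%nat with (S (p - i)) by lia. ring. }
      rewrite sm_minus, sm_scal, <- (proj1 (IHp s Hs)), pascal_sum in E.
      unfold h in E.
      rewrite (sm_ext _ (fun i => Binomial.C (S p) i * (K (S i) s * M (S p - i)%nat s))) by (intros; ring).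
      lra. }
    split; [apply Hid; auto|].
    intros i Hi. destruct (Nat.eq_dec i (S p)) as [->|Hne].
    2:{ apply (proj2 (IHp s Hs)); lia. }
    apply Kder; auto.
    eexists.
    apply is_derive_ext_loc with (fun s' => M (S (S p)) s' - sm (fun i => Binomial.C (S p) i * K (S i) s' * M (S p - i)%nat s') (S p)).
    { generalize (Dopen s Hs). apply filter_imp. intros x Hx. symmetry. apply ident_alt; auto. }
    apply is_derive_minus'.
    + apply Mder; auto.
    + apply sm_derive. intros i Hi'.
      apply is_derive_mult'.
      * apply is_derive_mult' with (f := fun _ => Binomial.C (S p) i).
        -- apply (is_derive_const (K:=R_AbsRing) (V:=R_NormedModule)).
        -- apply (proj2 (IHp s Hs)); lia.
      * apply Mder; auto.
Qed.
End Cumul.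

Section Lims.
Context {T : Type} {F : (T -> Prop) -> Prop} {FF : Filter F}.

Lemma lim_plus (f g : T -> R) a b : filterlim f F (locally a) -> filterlim g F (locally b) ->
  filterlim (fun x => f x + g x) F (locally (a + b)).
Proof.
  intros H1 H2.
  apply (filterlim_comp_2 f g (fun u v => plus u v) H1 H2).
  apply (filterlim_plus (K:=R_AbsRing) (V:=R_NormedModule) a b).
Qed.

Lemma lim_mult (f g : T -> R) a b : filterlim f F (locally a) -> filterlim g F (locally b) ->
  filterlim (fun x => f x * g x) F (locally (a * b)).
Proof.
  intros H1 H2.
  apply (filterlim_comp_2 f g (fun u v => mult u v) H1 H2).
  apply (filterlim_mult (K:=R_AbsRing) a b).
Qed.

Lemma lim_const (c : R) : filterlim (fun _ : T => c) F (locally c).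
Proof. apply filterlim_const. Qed.

Lemma lim_opp (f : T -> R) a : filterlim f F (locally a) -> filterlim (fun x => - f x) F (locally (- a)).
Proof.
  intros H. apply filterlim_ext with (fun x => (-1) * f x); [intros; ring|].
  replace (-a) with ((-1) * a) by ring. apply lim_mult; auto. apply lim_const.
Qed.

Lemma lim_minus (f g : T -> R) a b : filterlim f F (locally a) -> filterlim g F (locally b) ->
  filterlim (fun x => f x - g x) F (locally (a - b)).
Proof. intros. apply lim_plus; auto. apply lim_opp; auto. Qed.

Lemma lim_sm (f : nat -> T -> R) (l : nat -> R) n :
  (forall i, (i < n)%nat -> filterlim (f i) F (locally (l i))) ->
  filterlim (fun x => sm (fun i => f i x) n) F (locally (sm l n)).
Proof.
  induction n; intros H; simpl.
  - apply lim_const.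
  - apply lim_plus; [apply IHn; intros; apply H; lia|apply H; lia].
Qed.

Lemma lim_ext_ev (f g : T -> R) l : F (fun x => f x = g x) -> filterlim f F (locally l) ->
  filterlim g F (locally l).
Proof. intros. apply filterlim_ext_loc with f; auto. Qed.

Lemma lim_ev_const (f : T -> R) c : F (fun x => f x = c) -> filterlim f F (locally c).
Proof. intros H. apply lim_ext_ev with (fun _ => c). generalize H; apply filter_imp; intros; auto. apply lim_const. Qed.

End Lims.

Definition ee (j : nat) : R := if Nat.eqb j 2 then 1 else 0.

Section Abstract.
Context {T : Type} {F : (T -> Prop) -> Prop} {FF : Filter F}.
Variables (nu la : nat -> T -> R) (m : nat -> R).
Hypothesis m0 : m O = 1.
Hypothesis m1 : m 1%nat = 0.
Hypothesis mSS : forall j, m (S (S j)) = INR (S j) * m j.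
Hypothesis Hev : F (fun x => nu O x = 1 /\ la 1%nat x = 0 /\ la 2%nat x = 1 /\
   forall p, nu (S p) x = sm (fun i => Binomial.C p i * la (S i) x * nu (p - i)%nat x) (S p)).

Lemma gauss_ident p : m (S p) = sm (fun i => Binomial.C p i * ee (S i) * m (p - i)%nat) (S p).
Proof.
  destruct p.
  - simpl. rewrite m1. unfold ee. simpl. ring.
  - rewrite (sm_single _ _ 1%nat).
    2: lia.
    2:{ intros i Hi Hne; unfold ee.
      destruct (Nat.eqb (S i) 2) eqn:E; [apply Nat.eqb_eq in E; lia| ring]. }
    unfold ee; simpl Nat.eqb. cbv iota.
    rewrite pascal_step3 by lia. rewrite C_n_0. rewrite mSS.
    replace (S p - 1)%nat with p by lia. replace (S p - 0)%nat with (S p) by lia.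
    simpl INR. field.
Qed.

Lemma limA p : (forall i, (i <= p)%nat -> filterlim (la (S i)) F (locally (ee (S i)))) ->
  (forall i, (i <= p)%nat -> filterlim (nu i) F (locally (m i))) ->
  filterlim (nu (S p)) F (locally (m (S p))).
Proof.
  intros H1 H2.
  apply lim_ext_ev with (fun x => sm (fun i => Binomial.C p i * la (S i) x * nu (p - i)%nat x) (S p)).
  { generalize Hev; apply filter_imp. intros x Hx. symmetry. apply Hx. }
  rewrite gauss_ident.
  apply lim_sm with (f := fun i x => Binomial.C p i * la (S i) x * nu (p - i)%nat x).
  intros i Hi. apply lim_mult; [apply lim_mult; [apply lim_const|apply H1; lia]|apply H2; lia].
Qed.

Lemma limB p : (forall i, (i < p)%nat -> filterlim (la (S i)) F (locally (ee (S i)))) ->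
  (forall i, (i <= S p)%nat -> filterlim (nu i) F (locally (m i))) ->
  filterlim (la (S p)) F (locally (ee (S p))).
Proof.
  intros H1 H2.
  apply lim_ext_ev with (fun x => nu (S p) x - sm (fun i => Binomial.C p i * la (S i) x * nu (p - i)%nat x) p).
  { generalize Hev; apply filter_imp. intros x (Hx0 & _ & _ & Hx). rewrite Hx. simpl.
    rewrite C_n_n, Nat.sub_diag, Hx0. ring. }
  replace (ee (S p)) with (m (S p) - sm (fun i => Binomial.C p i * ee (S i) * m (p - i)%nat) p).
  2:{ rewrite gauss_ident. simpl. rewrite C_n_n, Nat.sub_diag, m0. ring. }
  apply lim_minus; [apply H2; lia|].
  apply lim_sm with (f := fun i x => Binomial.C p i * la (S i) x * nu (p - i)%nat x).
  intros i Hi. apply lim_mult; [apply lim_mult; [apply lim_const|apply H1; lia]|apply H2; lia].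
Qed.

Lemma strong_ind (P : nat -> Prop) n :
  (forall j, (j <= n)%nat -> (forall k, (k < j)%nat -> P k) -> P j) -> forall j, (j <= n)%nat -> P j.
Proof.
  intros H. assert (forall j, (j <= n)%nat -> forall k, (k <= j)%nat -> P k).
  { induction j; intros Hj k Hk.
    - assert (k = O) by lia. subst. apply H; [lia|intros; lia].
    - destruct (Nat.eq_dec k (S j)) as [->|Hne].
      + apply H; auto. intros k Hk'. apply IHj; lia.
      + apply IHj; lia. }
  intros j Hj. apply (H0 j Hj j). lia.
Qed.

Lemma nu0 : filterlim (nu O) F (locally (m O)).
Proof. rewrite m0. apply lim_ev_const. generalize Hev; apply filter_imp; intros x Hx; apply Hx. Qed.

Theorem abstract_equiv n : (3 <= n)%nat ->
  (forall j, (3 <= j <= n)%nat -> filterlim (nu j) F (locally (m j))) <->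
  (forall j, (3 <= j <= n)%nat -> filterlim (la j) F (locally 0)).
Proof.
  intros Hn. split; intros H.
  - assert (Hnu : forall j, (j <= n)%nat -> filterlim (nu j) F (locally (m j))).
    { intros j Hj. destruct j as [|[|[|j]]].
      - apply nu0.
      - rewrite m1. apply lim_ev_const. generalize Hev; apply filter_imp.
        intros x (H0 & H1 & H2 & Hx). rewrite Hx. simpl. rewrite H1. ring.
      - replace (m 2%nat) with 1 by (rewrite mSS, m0; simpl; ring).
        apply lim_ev_const. generalize Hev; apply filter_imp.
        intros x (H0 & H1 & H2 & Hx). rewrite Hx. simpl.
        rewrite H1, H2, H0. rewrite C_n_n. ring.
      - apply H; lia. }
    assert (Hla : forall j, (j <= n)%nat -> (1 <= j)%nat -> filterlim (la j) F (locally (ee j))).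
    { apply (strong_ind (fun j => (1 <= j)%nat -> filterlim (la j) F (locally (ee j)))).
      intros j Hj IH Hj1. destruct j as [|p]; [lia|].
      apply limB.
      - intros i Hi. apply IH; lia.
      - intros i Hi. apply Hnu; lia. }
    intros j Hj. replace 0 with (ee j).
    + apply Hla; lia.
    + unfold ee. destruct (Nat.eqb j 2) eqn:E; auto. apply Nat.eqb_eq in E. lia.
  - assert (Hla : forall j, (j <= n)%nat -> (1 <= j)%nat -> filterlim (la j) F (locally (ee j))).
    { intros j Hj Hj1. destruct j as [|[|[|j]]]; [lia| | |].
      - apply lim_ev_const. generalize Hev; apply filter_imp. intros x Hx; apply Hx.
      - apply lim_ev_const. generalize Hev; apply filter_imp. intros x Hx; apply Hx.
      - apply H; lia. }
    assert (Hnu : forall j, (j <= n)%nat -> filterlim (nu j) F (locally (m j))).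
    { apply strong_ind. intros j Hj IH. destruct j as [|p].
      - apply nu0.
      - apply limA.
        + intros i Hi. apply Hla; lia.
        + intros i Hi. apply IH; lia. }
    intros j Hj; apply Hnu; lia.
Qed.
End Abstract.

Ltac rr := match goal with |- ?a = ?b => change (@eq R a b) end; ring.

Lemma ball_R (y l eps : R) : ball l eps y <-> Rabs (y - l) < eps.
Proof. unfold ball; simpl. unfold AbsRing_ball, abs, minus, plus, opp; simpl. tauto. Qed.

Lemma lim_eps {T} {F : (T -> Prop) -> Prop} {FF : Filter F} (f : T -> R) l :
  (forall eps, 0 < eps -> F (fun x => Rabs (f x - l) < eps)) -> filterlim f F (locally l).
Proof.
  intros H. apply filterlim_locally. intros eps.
  generalize (H eps (cond_pos eps)). apply filter_imp. intros x Hx. apply ball_R. auto.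
Qed.

Lemma exd_cont (f : R -> R) x : ex_derive f x -> continuous f x.
Proof. intros H; apply (ex_derive_continuous (K:=R_AbsRing) (V:=R_NormedModule) f x H). Qed.

Lemma exRc (f : R -> R) a b : (forall z, Rmin a b <= z <= Rmax a b -> continuous f z) -> ex_RInt f a b.
Proof. apply (ex_RInt_continuous (V:=R_CompleteNormedModule)). Qed.

Lemma RInt_scal_R (f : R -> R) k a b : ex_RInt f a b -> RInt (fun t => k * f t) a b = k * RInt f a b.
Proof. intros H. apply (RInt_scal (V:=R_CompleteNormedModule) f a b k H). Qed.

Lemma RInt_comp_lin_R (f : R -> R) u v a b : ex_RInt f (u * a + v) (u * b + v) ->
  RInt (fun y => u * f (u * y + v)) a b = RInt f (u * a + v) (u * b + v).
Proof. intros H. apply (RInt_comp_lin (V:=R_CompleteNormedModule) f u v a b H). Qed.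

Lemma RInt_minus_R (f g : R -> R) a b : ex_RInt f a b -> ex_RInt g a b ->
  RInt (fun t => f t - g t) a b = RInt f a b - RInt g a b.
Proof. intros H1 H2. apply (RInt_minus (V:=R_CompleteNormedModule) f g a b H1 H2). Qed.

Lemma RInt_plus_R (f g : R -> R) a b : ex_RInt f a b -> ex_RInt g a b ->
  RInt (fun t => f t + g t) a b = RInt f a b + RInt g a b.
Proof. intros H1 H2. apply (RInt_plus (V:=R_CompleteNormedModule) f g a b H1 H2). Qed.

Lemma RInt_ext_R (f g : R -> R) a b : (forall x, Rmin a b < x < Rmax a b -> f x = g x) ->
  RInt f a b = RInt g a b.
Proof. apply (RInt_ext (V:=R_CompleteNormedModule)). Qed.

Lemma RInt_point_R (f : R -> R) a : RInt f a a = 0.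
Proof. apply (RInt_point (V:=R_CompleteNormedModule)). Qed.

Lemma RInt_Chasles_R (f : R -> R) a b c : ex_RInt f a b -> ex_RInt f b c ->
  RInt f a b + RInt f b c = RInt f a c.
Proof. apply (RInt_Chasles (V:=R_CompleteNormedModule)). Qed.

Lemma RInt_swap_R (f : R -> R) a b : ex_RInt f a b -> RInt f b a = - RInt f a b.
Proof. intros H. symmetry. apply (opp_RInt_swap (V:=R_CompleteNormedModule) f a b H). Qed.

Definition gg (u : R) := exp (- u ^ 2).
Definition SS (x : R) := RInt gg 0 x.
Definition fB (x t : R) := exp (- (x ^ 2 * (1 + t ^ 2))) / (1 + t ^ 2).
Definition BB (x : R) := RInt (fB x) 0 1.

Lemma pos1t2 t : 0 < 1 + t ^ 2.
Proof. nra. Qed.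

Lemma gg_cont x : continuous gg x.
Proof. apply exd_cont. unfold gg. auto_derive. auto. Qed.

Lemma gg_ex a b : ex_RInt gg a b.
Proof. apply exRc. intros; apply gg_cont. Qed.

Lemma fB_ex x : ex_RInt (fB x) 0 1.
Proof.
  apply exRc. intros z _. apply exd_cont. unfold fB.
  auto_derive. generalize (pos1t2 z); lra.
Qed.

Lemma fB_derive (u v : R) : is_derive (fun z => fB z v) u (-2 * u * exp (- (u ^ 2 * (1 + v ^ 2)))).
Proof.
  unfold fB. auto_derive.
  - generalize (pos1t2 v); lra.
  - replace (u * (u * 1) * (1 + v * (v * 1))) with (u ^ 2 * (1 + v ^ 2)) by ring.
    field. generalize (pos1t2 v); lra.
Qed.

Lemma SS_derive x : is_derive SS x (gg x).
Proof.
  apply is_derive_RInt with 0.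
  - apply filter_forall. intros b. apply RInt_correct, gg_ex.
  - apply gg_cont.
Qed.

Lemma BB_derive x : is_derive BB x (-2 * gg x * SS x).
Proof.
  unfold BB.
  eapply is_derive_ext. { intros t. reflexivity. }
  assert (H := is_derive_RInt_param fB 0 1 x).
  match type of H with _ -> _ -> _ -> is_derive _ _ ?l => replace (-2 * gg x * SS x) with l end.
  - apply H.
    + apply filter_forall. intros x0 t _. eexists. apply fB_derive.
    + intros t _. apply continuity_2d_pt_ext with (fun u v => -2 * u * exp (- (u * u * (1 + v * v)))).
      { intros u v. symmetry. replace (u * u * (1 + v * v)) with (u ^ 2 * (1 + v ^ 2)) by ring.
        apply is_derive_unique, fB_derive. }
      apply continuity_2d_pt_mult.
      * apply continuity_2d_pt_mult. apply continuity_2d_pt_const. apply continuity_2d_pt_id1.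
      * apply continuity_1d_2d_pt_comp with (f := exp) (g := fun u v => - (u * u * (1 + v * v))).
        -- apply derivable_continuous_pt, derivable_pt_exp.
        -- apply continuity_2d_pt_opp. apply continuity_2d_pt_mult.
           apply continuity_2d_pt_mult; apply continuity_2d_pt_id1.
           apply continuity_2d_pt_plus. apply continuity_2d_pt_const.
           apply continuity_2d_pt_mult; apply continuity_2d_pt_id2.
    + apply filter_forall. intros; apply fB_ex.
  - rewrite (RInt_ext_R _ (fun t => (-2 * gg x) * (x * gg (x * t + 0)))).
    2:{ intros t _. transitivity (-2 * x * exp (- (x ^ 2 * (1 + t ^ 2)))); [apply is_derive_unique, fB_derive|]. unfold gg; simpl.
        replace (-(x*(x*1)*(1+t*(t*1)))) with (-(x*(x*1)) + -((x*t+0)*((x*t+0)*1))) by ring.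
        rewrite exp_plus. ring. }
    rewrite RInt_scal_R.
    2:{ apply exRc. intros z _. apply exd_cont. unfold gg. auto_derive. auto. }
    rewrite RInt_comp_lin_R by apply gg_ex.
    unfold SS. rewrite Rmult_0_r, Rplus_0_r, Rmult_1_r, Rplus_0_r. reflexivity.
Qed.

Lemma HH_const x : 0 <= x -> SS x * SS x + BB x = PI / 4.
Proof.
  intros Hx.
  assert (H0 : SS 0 * SS 0 + BB 0 = PI / 4).
  { unfold SS. rewrite RInt_point. unfold BB.
    rewrite (RInt_ext _ (fun t => / (1 + t²))).
    2:{ intros t _. unfold fB. unfold Rsqr. replace (0 ^ 2 * (1 + t ^ 2)) with 0 by ring.
        rewrite Ropp_0, exp_0. simpl. field. nra. }
    rewrite (is_RInt_unique _ _ _ (atan 1 - atan 0)).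
    - rewrite atan_1, atan_0. change (zero : R) with 0. ring.
    - apply (is_RInt_derive atan (fun t => / (1 + t²))).
      + intros; apply is_derive_atan.
      + intros z _. apply exd_cont. auto_derive. unfold Rsqr; nra. }
  destruct (Req_dec x 0) as [->|Hne]; auto.
  rewrite <- H0. symmetry.
  apply (eq_is_derive (fun x => SS x * SS x + BB x)); [|lra].
  intros t _.
  assert (Hd : is_derive (fun x => SS x * SS x + BB x) t ((gg t * SS t + SS t * gg t) + (-2 * gg t * SS t))).
  { apply is_derive_plus'; [apply is_derive_mult'; apply SS_derive|apply BB_derive]. }
  replace ((gg t * SS t + SS t * gg t) + (-2 * gg t * SS t)) with 0 in Hd by ring.
  exact Hd.
Qed.

Lemma RInt_const_R (c a b : R) : RInt (fun _ => c) a b = (b - a) * c.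
Proof. apply (RInt_const (V:=R_CompleteNormedModule)). Qed.

Lemma ex_const_R (c a b : R) : ex_RInt (fun _ => c) a b.
Proof. apply (ex_RInt_const (V:=R_NormedModule)). Qed.

Lemma RInt_ge0 (f : R -> R) a b : a <= b -> ex_RInt f a b -> (forall x, a < x < b -> 0 <= f x) ->
  0 <= RInt f a b.
Proof.
  intros Hab Hf H.
  assert (H1 : RInt (fun _ => 0) a b <= RInt f a b) by (apply RInt_le; auto; apply ex_const_R).
  rewrite RInt_const_R in H1. lra.
Qed.

Lemma SS_nonneg x : 0 <= x -> 0 <= SS x.
Proof.
  intros Hx. apply RInt_ge0; auto. apply gg_ex. intros; unfold gg; apply Rlt_le, exp_pos.
Qed.

Lemma BB_bounds x : 0 <= BB x <= exp (- x ^ 2).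
Proof.
  split.
  - apply RInt_ge0; [lra|apply fB_ex|]. intros t _. unfold fB.
    apply Rlt_le, Rdiv_lt_0_compat; [apply exp_pos|apply pos1t2].
  - assert (E : RInt (fun _ => exp (- x ^ 2)) 0 1 = exp (- x ^ 2)) by (rewrite RInt_const_R; lra).
    rewrite <- E.
    apply RInt_le; [lra|apply fB_ex|apply ex_const_R|].
    intros t Ht. unfold fB.
    assert (H1 : exp (- (x ^ 2 * (1 + t ^ 2))) <= exp (- x ^ 2)).
    { destruct (Req_dec (x ^ 2 * t ^ 2) 0) as [E0|E0].
      - right. f_equal. nra.
      - left. apply exp_increasing. nra. }
    generalize (pos1t2 t); intros Hp.
    apply Rmult_le_reg_r with (1 + t ^ 2); auto.
    unfold Rdiv. rewrite Rmult_assoc, Rinv_l by lra.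
    assert (0 < exp (- x ^ 2)) by apply exp_pos. nra.
Qed.

Lemma lim_inv_p : filterlim (fun x => / x) (Rbar_locally p_infty) (locally 0).
Proof.
  apply lim_eps. intros eps Heps. exists (/ eps). intros x Hx.
  assert (0 < / eps) by (apply Rinv_0_lt_compat; auto).
  rewrite Rminus_0_r, Rabs_pos_eq by (left; apply Rinv_0_lt_compat; lra).
  replace eps with (/ / eps) by (field; lra).
  apply Rinv_lt_contravar; nra.
Qed.

Lemma exp_negsq_bound x : 0 < x -> exp (- x ^ 2) <= / x.
Proof.
  intros Hx. assert (H := exp_ineq1_le (x ^ 2)).
  rewrite exp_Ropp. apply Rinv_le_contravar; auto. nra.
Qed.

Lemma BB_lim : filterlim BB (Rbar_locally p_infty) (locally 0).
Proof.
  apply (filterlim_le_le (F:=Rbar_locally p_infty) (fun _ => 0) BB (fun x => / x) 0).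
  - exists 0. intros x Hx. split; [apply BB_bounds|].
    apply Rle_trans with (exp (- x ^ 2)); [apply BB_bounds|apply exp_negsq_bound; auto].
  - apply lim_const.
  - apply lim_inv_p.
Qed.

Lemma SS_lim : filterlim SS (Rbar_locally p_infty) (locally (sqrt PI / 2)).
Proof.
  apply lim_ext_ev with (fun x => sqrt (PI / 4 - BB x)).
  { exists 0. intros x Hx. rewrite <- (HH_const x) by lra.
    replace (SS x * SS x + BB x - BB x) with (SS x * SS x) by ring.
    apply sqrt_square, SS_nonneg; lra. }
  replace (sqrt PI / 2) with (sqrt (PI / 4 - 0)).
  2:{ replace (PI / 4 - 0) with ((sqrt PI / 2) * (sqrt PI / 2)).
      - apply sqrt_square. generalize (sqrt_pos PI); lra.
      - replace (sqrt PI / 2 * (sqrt PI / 2)) with (sqrt PI * sqrt PI / 4) by field.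
        rewrite sqrt_sqrt; [ring|generalize PI_RGT_0; lra]. }
  apply filterlim_comp with (G := locally (PI / 4 - 0)).
  - apply lim_minus; [apply lim_const|apply BB_lim].
  - apply continuity_pt_filterlim, continuity_pt_sqrt. generalize PI_RGT_0; lra.
Qed.

Definition hj (j : nat) (x : R) := x ^ j * exp (- x ^ 2 / 2) / sqrt (2 * PI).

Lemma hj_cont j x : continuous (hj j) x.
Proof. apply exd_cont. unfold hj. auto_derive. auto. Qed.

Lemma hj_ex j a b : ex_RInt (hj j) a b.
Proof. apply exRc. intros; apply hj_cont. Qed.

Lemma sqrt2PI_pos : 0 < sqrt (2 * PI).
Proof. apply sqrt_lt_R0. generalize PI_RGT_0; lra. Qed.

Lemma exp_mult_nat (n : nat) y : exp (INR n * y) = exp y ^ n.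
Proof.
  induction n; simpl.
  - rewrite Rmult_0_l, exp_0. auto.
  - rewrite <- IHn. rewrite <- exp_plus. f_equal. destruct n; simpl; ring.
Qed.

Lemma poly_gauss (k : nat) : exists Cc, 0 < Cc /\ forall a, 1 <= a -> a ^ k * exp (- a ^ 2 / 2) <= Cc / a.
Proof.
  set (N := S k). set (c := 2 * INR N).
  assert (Hc : 0 < c) by (unfold c, N; rewrite S_INR; generalize (pos_INR k); lra).
  exists (c ^ N). split; [apply pow_lt; auto|].
  intros a Ha.
  assert (E : exp (a ^ 2 / 2) = exp (a ^ 2 / c) ^ N).
  { rewrite <- exp_mult_nat. f_equal. unfold c. field. unfold N; rewrite S_INR; generalize (pos_INR k); lra. }
  assert (H1 : a ^ 2 / c <= exp (a ^ 2 / c)) by (generalize (exp_ineq1_le (a ^ 2 / c)); lra).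
  assert (H2 : (a ^ 2 / c) ^ N <= exp (a ^ 2 / 2)).
  { rewrite E. apply pow_incr. split; auto. apply Rlt_le, Rdiv_lt_0_compat; auto; nra. }
  assert (Hapos : 0 < a) by lra.
  assert (HE : 0 < exp (a ^ 2 / 2)) by apply exp_pos.
  replace (- a ^ 2 / 2) with (- (a ^ 2 / 2)) by field. rewrite exp_Ropp.
  apply Rmult_le_reg_r with (a * exp (a ^ 2 / 2)); [apply Rmult_lt_0_compat; lra|].
  replace (a ^ k * / exp (a ^ 2 / 2) * (a * exp (a ^ 2 / 2))) with (a ^ S k) by (rewrite <- tech_pow_Rmult; field; lra).
  replace (c ^ N / a * (a * exp (a ^ 2 / 2))) with (c ^ N * exp (a ^ 2 / 2)) by (field; lra).
  assert (H3 : c ^ N * (a ^ 2 / c) ^ N = a ^ (2 * N)).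
  { rewrite <- Rpow_mult_distr. replace (c * (a ^ 2 / c)) with (a ^ 2) by (field; lra).
    rewrite pow_mult. auto. }
  assert (H4 : a ^ S k <= a ^ (2 * N)) by (apply Rle_pow; [lra|unfold N; lia]).
  assert (H5 : c ^ N * (a ^ 2 / c) ^ N <= c ^ N * exp (a ^ 2 / 2)).
  { apply Rmult_le_compat_l; auto. apply pow_le; lra. }
  lra.
Qed.

Lemma decay_lim (f : R -> R) : (exists Cc, 0 < Cc /\ forall x, 1 <= Rabs x -> Rabs (f x) <= Cc / Rabs x) ->
  filterlim f (Rbar_locally p_infty) (locally 0) /\ filterlim f (Rbar_locally m_infty) (locally 0).
Proof.
  intros (Cc & HC & H).
  assert (K : forall eps, 0 < eps -> forall x, Rmax 1 (2 * Cc / eps) < Rabs x -> Rabs (f x - 0) < eps).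
  { intros eps He x Hx. rewrite Rminus_0_r.
    assert (H1 : 1 < Rabs x) by (generalize (Rmax_l 1 (2 * Cc / eps)); lra).
    assert (H2 : 2 * Cc / eps < Rabs x) by (generalize (Rmax_r 1 (2 * Cc / eps)); lra).
    apply Rle_lt_trans with (Cc / Rabs x); [apply H; lra|].
    apply Rmult_lt_reg_r with (Rabs x); [lra|].
    unfold Rdiv. rewrite Rmult_assoc, Rinv_l by lra.
    apply (Rmult_lt_compat_l eps) in H2; auto.
    replace (eps * (2 * Cc / eps)) with (2 * Cc) in H2 by (field; lra). lra. }
  split; apply lim_eps; intros eps He.
  - exists (Rmax 1 (2 * Cc / eps)). intros x Hx. apply K; auto.
    rewrite Rabs_pos_eq; [lra|]. generalize (Rmax_l 1 (2 * Cc / eps)); lra.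
  - exists (- Rmax 1 (2 * Cc / eps)). intros x Hx. apply K; auto.
    rewrite Rabs_left; [lra|]. generalize (Rmax_l 1 (2 * Cc / eps)); lra.
Qed.

Definition DD (j : nat) (x : R) := x ^ S j * exp (- x ^ 2 / 2) / sqrt (2 * PI).
Definition EE (x : R) := exp (- x ^ 2 / 2) / sqrt (2 * PI).

Lemma decay_pow (k : nat) : exists Cc, 0 < Cc /\ forall x, 1 <= Rabs x ->
  Rabs (x ^ k * exp (- x ^ 2 / 2) / sqrt (2 * PI)) <= Cc / Rabs x.
Proof.
  destruct (poly_gauss k) as (Cc & HC & H).
  exists (Cc / sqrt (2 * PI)). split; [apply Rdiv_lt_0_compat; auto; apply sqrt2PI_pos|].
  intros x Hx. generalize sqrt2PI_pos; intros Hs.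
  unfold Rdiv. rewrite !Rabs_mult, Rabs_inv, <- RPow_abs.
  rewrite (Rabs_pos_eq (exp _)) by (apply Rlt_le, exp_pos).
  rewrite (Rabs_pos_eq (sqrt _)) by lra.
  rewrite <- pow2_abs. specialize (H _ Hx).
  replace (Cc * / sqrt (2 * PI) * / Rabs x) with (Cc / Rabs x * / sqrt (2 * PI)) by (field; lra).
  apply Rmult_le_compat_r; [apply Rlt_le, Rinv_0_lt_compat; lra|auto].
Qed.

Lemma DD_lims j : filterlim (DD j) (Rbar_locally p_infty) (locally 0) /\ filterlim (DD j) (Rbar_locally m_infty) (locally 0).
Proof. apply decay_lim. apply (decay_pow (S j)). Qed.

Lemma EE_lims : filterlim EE (Rbar_locally p_infty) (locally 0) /\ filterlim EE (Rbar_locally m_infty) (locally 0).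
Proof.
  apply decay_lim. destruct (decay_pow 0) as (Cc & HC & H). exists Cc; split; auto.
  intros x Hx. specialize (H x Hx). unfold EE. simpl in H. rewrite Rmult_1_l in H. auto.
Qed.

Lemma DD_derive j x : is_derive (DD j) x (INR (S j) * hj j x - hj (S (S j)) x).
Proof.
  unfold DD, hj. auto_derive; auto.
  change (match j with 0%nat => 1 | S _ => INR j + 1 end) with (INR (S j)).
  replace (exp (- (x * (x * 1)) * / 2)) with (exp (- x ^ 2 / 2)) by (f_equal; simpl; field).
  replace (x ^ S (S j)) with (x * (x * x ^ j)) by (simpl; ring).
  field. generalize sqrt2PI_pos; lra.
Qed.

Lemma EE_derive x : is_derive EE x (- hj 1 x).
Proof.
  unfold EE, hj. auto_derive; auto.
  replace (exp (- (x * (x * 1)) * / 2)) with (exp (- x ^ 2 / 2)) by (f_equal; simpl; field).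
  simpl. field. generalize sqrt2PI_pos; lra.
Qed.

Lemma NE_derive x : is_derive (fun x => - EE x) x (hj 1 x).
Proof.
  unfold EE, hj. auto_derive; auto.
  replace (exp (- (x * (x * 1)) * / 2)) with (exp (- x ^ 2 / 2)) by (f_equal; simpl; field).
  simpl. field. generalize sqrt2PI_pos; lra.
Qed.

Lemma sqrt2_pos : 0 < sqrt 2.
Proof. apply sqrt_lt_R0; lra. Qed.

Lemma sqrtPI_pos : 0 < sqrt PI.
Proof. apply sqrt_lt_R0. apply PI_RGT_0. Qed.

Lemma hj0_sub y : sqrt 2 * hj 0 (sqrt 2 * y + 0) = / sqrt PI * gg y.
Proof.
  generalize sqrt2_pos sqrtPI_pos; intros H2 HP.
  unfold hj, gg. rewrite sqrt_mult by (try lra; generalize PI_RGT_0; lra).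
  replace ((sqrt 2 * y + 0) ^ 2) with (sqrt 2 * sqrt 2 * y ^ 2) by ring.
  rewrite sqrt_sqrt by lra.
  replace (- (2 * y ^ 2) / 2) with (- y ^ 2) by field.
  simpl. field. split; lra.
Qed.

Lemma Phi_SS x : RInt (hj 0) 0 x = SS (x / sqrt 2) / sqrt PI.
Proof.
  generalize sqrt2_pos sqrtPI_pos; intros H2 HP.
  assert (E := RInt_comp_lin_R (hj 0) (sqrt 2) 0 0 (x / sqrt 2) (hj_ex _ _ _)).
  replace (sqrt 2 * 0 + 0) with 0 in E by ring.
  replace (sqrt 2 * (x / sqrt 2) + 0) with x in E by (field; lra).
  rewrite <- E.
  rewrite (RInt_ext_R _ (fun y => / sqrt PI * gg y)) by (intros; apply hj0_sub).
  rewrite RInt_scal_R by apply gg_ex. unfold SS, Rdiv. apply Rmult_comm.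
Qed.

Lemma SS_odd y : SS (- y) = - SS y.
Proof.
  assert (E := RInt_comp_lin_R gg (-1) 0 0 y (gg_ex _ _)).
  replace (-1 * 0 + 0) with 0 in E by ring.
  replace (-1 * y + 0) with (- y) in E by ring.
  unfold SS. rewrite <- E.
  rewrite (RInt_ext_R _ (fun t => -1 * gg t)).
  - rewrite RInt_scal_R by apply gg_ex. rr.
  - intros t _. unfold gg. f_equal. f_equal. f_equal. ring.
Qed.

Lemma lin_p c : 0 < c -> filterlim (fun x => x / c) (Rbar_locally p_infty) (Rbar_locally p_infty).
Proof.
  intros Hc P [M HM]. exists (M * c). intros x Hx. apply HM.
  apply Rmult_lt_reg_r with c; auto. unfold Rdiv. rewrite Rmult_assoc, Rinv_l by lra. lra.
Qed.

Lemma lin_m c : 0 < c -> filterlim (fun x => - x / c) (Rbar_locally m_infty) (Rbar_locally p_infty).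
Proof.
  intros Hc P [M HM]. exists (- (M * c)). intros x Hx. apply HM.
  apply Rmult_lt_reg_r with c; auto. unfold Rdiv. rewrite Rmult_assoc, Rinv_l by lra. lra.
Qed.

Lemma Phi_lim_p : filterlim (fun x => RInt (hj 0) 0 x) (Rbar_locally p_infty) (locally (1/2)).
Proof.
  apply filterlim_ext with (fun x => SS (x / sqrt 2) * / sqrt PI).
  { intros. rewrite Phi_SS. reflexivity. }
  replace (1/2) with (sqrt PI / 2 * / sqrt PI) by (generalize sqrtPI_pos; intros; field; lra).
  apply lim_mult; [|apply lim_const].
  apply filterlim_comp with (G := Rbar_locally p_infty); [apply lin_p, sqrt2_pos|apply SS_lim].
Qed.

Lemma Phi_lim_m : filterlim (fun x => RInt (hj 0) 0 x) (Rbar_locally m_infty) (locally (- (1/2))).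
Proof.
  apply filterlim_ext with (fun x => - (SS (- x / sqrt 2) * / sqrt PI)).
  { intros. rewrite Phi_SS. replace (x / sqrt 2) with (- (- x / sqrt 2)) by (field; generalize sqrt2_pos; lra).
    rewrite SS_odd. unfold Rdiv. ring. }
  replace (1/2) with (sqrt PI / 2 * / sqrt PI) by (generalize sqrtPI_pos; intros; field; lra).
  apply lim_opp. apply lim_mult; [|apply lim_const].
  apply filterlim_comp with (G := Rbar_locally p_infty); [apply lin_m, sqrt2_pos|apply SS_lim].
Qed.

Definition Fm := Rbar_locally m_infty.
Definition Fp := Rbar_locally p_infty.

Lemma lim_diff (Phi : R -> R) la lb : filterlim Phi Fm (locally la) -> filterlim Phi Fp (locally lb) ->
  filterlim (fun ab : R * R => Phi (snd ab) - Phi (fst ab)) (filter_prod Fm Fp) (locally (lb - la)).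
Proof.
  intros H1 H2. unfold Fm, Fp in *.
  apply lim_minus.
  - apply filterlim_comp with (2 := H2). apply filterlim_snd; try apply Rbar_locally_filter.
  - apply filterlim_comp with (2 := H1). apply filterlim_fst; try apply Rbar_locally_filter.
Qed.

Fixpoint mj (j : nat) : R :=
  match j with O => 1 | S O => 0 | S (S k) => INR (S k) * mj k end.


Lemma FFp : Filter (filter_prod Fm Fp).
Proof. apply filter_prod_filter; apply Rbar_locally_filter. Qed.

Lemma mom0 : filterlim (fun ab : R * R => RInt (hj 0) (fst ab) (snd ab)) (filter_prod Fm Fp) (locally (mj 0)).
Proof.
  assert (FF := FFp).
  apply filterlim_ext with (fun ab : R * R => RInt (hj 0) 0 (snd ab) - RInt (hj 0) 0 (fst ab)).
  { intros [a b]; simpl. rewrite <- (RInt_Chasles_R (hj 0) a 0 b) by apply hj_ex.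
    rewrite (RInt_swap_R (hj 0) 0 a) by apply hj_ex. rr. }
  replace (mj 0) with (1/2 - - (1/2)) by (simpl; field).
  apply (lim_diff (fun x => RInt (hj 0) 0 x)); [apply Phi_lim_m|apply Phi_lim_p].
Qed.

Lemma mom1 : filterlim (fun ab : R * R => RInt (hj 1) (fst ab) (snd ab)) (filter_prod Fm Fp) (locally (mj 1)).
Proof.
  assert (FF := FFp).
  apply filterlim_ext with (fun ab : R * R => (- EE (snd ab)) - (- EE (fst ab))).
  { intros [a b]; simpl. symmetry. apply is_RInt_unique.
    apply (is_RInt_derive (fun x => - EE x) (hj 1)).
    - intros; apply NE_derive.
    - intros; apply hj_cont. }
  replace (mj 1) with (-0 - -0) by (simpl; ring).
  apply (lim_diff (fun x => - EE x)); apply lim_opp; [exact (proj2 EE_lims)|exact (proj1 EE_lims)].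
Qed.

Lemma momSS j : filterlim (fun ab : R * R => RInt (hj j) (fst ab) (snd ab)) (filter_prod Fm Fp) (locally (mj j)) ->
  filterlim (fun ab : R * R => RInt (hj (S (S j))) (fst ab) (snd ab)) (filter_prod Fm Fp) (locally (mj (S (S j)))).
Proof.
  intros IH. assert (FF := FFp).
  apply filterlim_ext with (fun ab : R * R => INR (S j) * RInt (hj j) (fst ab) (snd ab) - (DD j (snd ab) - DD j (fst ab))).
  { intros [a b]; cbn [fst snd].
    assert (E : RInt (fun x => INR (S j) * hj j x - hj (S (S j)) x) a b = DD j b - DD j a).
    { apply is_RInt_unique. apply (is_RInt_derive (DD j)).
      - intros; apply DD_derive.
      - intros z _. apply exd_cont. unfold hj. auto_derive; auto. }
    rewrite RInt_minus_R in E; [|apply exRc; intros; apply exd_cont; unfold hj; auto_derive; auto|apply hj_ex].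
    rewrite RInt_scal_R in E by apply hj_ex.
    rewrite <- E. rr. }
  replace (mj (S (S j))) with (INR (S j) * mj j - (0 - 0)) by (cbn [mj]; ring).
  apply (lim_minus (FF := FFp)).
  - apply (lim_mult (FF := FFp) (fun _ => INR (S j)) (fun x => RInt (hj j) (fst x) (snd x))).
    + apply (lim_const (FF := FFp)).
    + exact IH.
  - exact (lim_diff (DD j) 0 0 (proj2 (DD_lims j)) (proj1 (DD_lims j))).
Qed.

Lemma mom_lim j : filterlim (fun ab : R * R => RInt (hj j) (fst ab) (snd ab)) (filter_prod Fm Fp) (locally (mj j)).
Proof.
  revert j.
  assert (H : forall j, filterlim (fun ab : R * R => RInt (hj j) (fst ab) (snd ab)) (filter_prod Fm Fp) (locally (mj j)) /\
     filterlim (fun ab : R * R => RInt (hj (S j)) (fst ab) (snd ab)) (filter_prod Fm Fp) (locally (mj (S j)))).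
  { induction j as [|j IH].
    - split; [apply mom0|apply mom1].
    - split; [exact (proj2 IH)|exact (momSS j (proj1 IH))]. }
  intros j; exact (proj1 (H j)).
Qed.


Lemma normal_moment_val j :
  RInt_gen (fun x => x ^ j * exp (- x ^ 2 / 2) / sqrt (2 * PI))
    (Rbar_locally m_infty) (Rbar_locally p_infty) = mj j.
Proof.
  apply (@is_RInt_gen_unique R_CompleteNormedModule
     (Rbar_locally m_infty) (Rbar_locally p_infty)
     (Proper_StrongProper _ (Rbar_locally_filter _)) (Proper_StrongProper _ (Rbar_locally_filter _))).
  unfold is_RInt_gen.
  apply (filterlimi_lim_ext (FF := FFp) (fun ab : R * R => RInt (hj j) (fst ab) (snd ab))).
  - intros ab. apply (RInt_correct (V:=R_CompleteNormedModule)), hj_ex.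
  - apply mom_lim.
Qed.

Definition bc (a : nat -> R) (c : R) (j : nat) (k : nat) : R := a k * (INR k - c) ^ j.

Lemma CV_kb (b : nat -> R) : CV_radius (fun k => INR k * b k) = CV_radius b.
Proof.
  rewrite (CV_radius_ext _ (PS_incr_1 (PS_derive b))).
  - rewrite CV_radius_incr_1, CV_radius_derive. auto.
  - intros [|k]; cbn [PS_incr_1].
    + simpl. rewrite Rmult_0_l. reflexivity.
    + unfold PS_derive. replace (k + 1)%nat with (S k) by lia. reflexivity.
Qed.

Lemma PSeries_kb (b : nat -> R) x : PSeries (fun k => INR k * b k) x = x * PSeries (PS_derive b) x.
Proof.
  rewrite <- PSeries_incr_1. apply PSeries_ext.
  intros [|k]; cbn [PS_incr_1].
  - simpl. rewrite Rmult_0_l. reflexivity.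
  - unfold PS_derive. replace (k + 1)%nat with (S k) by lia. reflexivity.
Qed.

Lemma Rbar_min_same (x : Rbar) : Rbar_min x x = x.
Proof. destruct x; simpl; auto. rewrite Rmin_left; [auto|lra]. Qed.

Lemma CV_bc a c j : Rbar_le (CV_radius a) (CV_radius (bc a c j)).
Proof.
  induction j.
  - rewrite (CV_radius_ext (bc a c 0) a); [apply Rbar_le_refl|]. intros; unfold bc; simpl; ring.
  - destruct (Req_dec c 0) as [->|Hc].
    + rewrite (CV_radius_ext (bc a 0 (S j)) (fun k => INR k * bc a 0 j k)).
      * rewrite CV_kb; auto.
      * intros; unfold bc; simpl; ring.
    + rewrite (CV_radius_ext (bc a c (S j)) (PS_plus (fun k => INR k * bc a c j k) (PS_scal (- c) (bc a c j)))).
      * eapply Rbar_le_trans; [|apply CV_radius_plus].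
        rewrite CV_kb, CV_radius_scal by lra. rewrite Rbar_min_same. auto.
      * intros k; unfold bc, PS_plus, PS_scal, plus, scal; simpl; unfold mult; simpl. ring.
Qed.

Section Fam.
Variable a : nat -> R.
Hypothesis Ha_nonneg : forall k, 0 <= a k.
Hypothesis Ha0 : 0 < a 0%nat.

Definition Dom (s : R) := Rbar_lt (exp s) (CV_radius a).

Lemma Dom_bc c j s : Dom s -> Rbar_lt (Rabs (exp s)) (CV_radius (bc a c j)).
Proof.
  intros H. rewrite Rabs_pos_eq by (apply Rlt_le, exp_pos).
  eapply Rbar_lt_le_trans; [apply H|apply CV_bc].
Qed.

Definition NN (c : R) (j : nat) (s : R) := PSeries (bc a c j) (exp s).
Definition gf (s : R) := PSeries a (exp s).

Lemma NN0 c s : NN c 0 s = gf s.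
Proof. unfold NN, gf. apply PSeries_ext. intros; unfold bc; simpl; ring. Qed.

Lemma NN_derive c j s : Dom s -> is_derive (NN c j) s (NN c (S j) s + c * NN c j s).
Proof.
  intros Hs. unfold NN.
  assert (H1 : is_derive (fun s => PSeries (bc a c j) (exp s)) s (exp s * PSeries (PS_derive (bc a c j)) (exp s))).
  { apply (is_derive_comp (PSeries (bc a c j)) exp s).
    - apply is_derive_PSeries. apply Dom_bc; auto.
    - apply is_derive_exp. }
  replace (PSeries (bc a c (S j)) (exp s) + c * PSeries (bc a c j) (exp s))
    with (exp s * PSeries (PS_derive (bc a c j)) (exp s)); auto.
  rewrite <- PSeries_kb.
  rewrite <- PSeries_scal, <- PSeries_plus.
  - apply PSeries_ext. intros k. unfold bc, PS_plus, PS_scal, plus, scal; simpl; unfold mult; simpl. ring.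
  - apply CV_radius_inside, Dom_bc; auto.
  - apply ex_pseries_scal; [apply Rmult_comm|]. apply CV_radius_inside, Dom_bc; auto.
Qed.

Lemma sum_n_ind (u : nat -> R) k0 n : sum_n (fun k => if Nat.eq_dec k k0 then u k0 else 0) n =
  if Nat.leb k0 n then u k0 else 0.
Proof.
  induction n.
  - rewrite sum_O. destruct (Nat.eq_dec 0 k0) as [<-|Hne]; simpl; auto.
    destruct k0; [lia|]. simpl. auto.
  - rewrite sum_Sn, IHn. change (plus ?x ?y) with (x + y).
    destruct (Nat.eq_dec (S n) k0) as [<-|Hne].
    + replace (Nat.leb (S n) n) with false by (symmetry; apply Nat.leb_gt; lia).
      rewrite Nat.leb_refl. rr.
    + destruct (Nat.leb k0 n) eqn:E1.
      * apply Nat.leb_le in E1. replace (Nat.leb k0 (S n)) with true by (symmetry; apply Nat.leb_le; lia). rr.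
      * apply Nat.leb_gt in E1. replace (Nat.leb k0 (S n)) with false by (symmetry; apply Nat.leb_gt; lia). rr.
Qed.

Lemma series_ge_term (u : nat -> R) k0 : (forall k, 0 <= u k) -> ex_series u -> u k0 <= Series u.
Proof.
  intros Hu Hex.
  assert (E : Series (fun k => if Nat.eq_dec k k0 then u k0 else 0) = u k0).
  { apply is_series_unique. unfold is_series.
    apply filterlim_ext_loc with (fun _ => u k0).
    - exists k0. intros n Hn. rewrite sum_n_ind. replace (Nat.leb k0 n) with true by (symmetry; apply Nat.leb_le; lia). auto.
    - apply filterlim_const. }
  rewrite <- E at 1. apply Series_le; auto.
  intros n. destruct (Nat.eq_dec n k0) as [->|]; split; auto; try lra; apply Hu.
Qed.

Lemma gf_pos s : Dom s -> 0 < gf s.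
Proof.
  intros Hs. unfold gf, PSeries.
  apply Rlt_le_trans with (a 0%nat * exp s ^ 0); [simpl; lra|].
  apply (series_ge_term (fun k => a k * exp s ^ k) 0).
  - intros k. apply Rmult_le_pos; auto. apply pow_le, Rlt_le, exp_pos.
  - assert (H := CV_radius_inside a (exp s)). unfold ex_pseries in H.
    destruct H as [l Hl]. { rewrite Rabs_pos_eq by (apply Rlt_le, exp_pos). apply Hs. }
    exists l. apply is_series_ext with (2 := Hl). intros n. unfold scal; simpl; unfold mult; simpl.
    rewrite pow_n_pow. ring.
Qed.

Definition MM (c : R) (j : nat) (s : R) := NN c j s / gf s.

Lemma gf_derive c s : Dom s -> is_derive gf s (NN c 1 s + c * gf s).
Proof.
  intros Hs. rewrite <- (NN0 c s).
  apply is_derive_ext with (NN c 0). { intros; apply NN0. }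
  apply NN_derive; auto.
Qed.

Lemma MM_derive c j s : Dom s -> is_derive (MM c j) s (MM c (S j) s - MM c 1 s * MM c j s).
Proof.
  intros Hs. unfold MM. generalize (gf_pos s Hs); intros Hg.
  assert (H := is_derive_div (NN c j) gf s _ _ (NN_derive c j s Hs) (gf_derive c s Hs) ltac:(lra)).
  eapply is_derive_ext; [intros; reflexivity|].
  replace (NN c (S j) s / gf s - NN c 1 s / gf s * (NN c j s / gf s)) with
     (((NN c (S j) s + c * NN c j s) * gf s - NN c j s * (NN c 1 s + c * gf s)) / gf s ^ 2)
     by (field; lra).
  exact H.
Qed.

Lemma MM0 c s : Dom s -> MM c 0 s = 1.
Proof. intros Hs. unfold MM. rewrite NN0. field. generalize (gf_pos s Hs); lra. Qed.

Definition FF (s : R) := ln (PSeries a (exp s)).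

Lemma FF_derive c s : Dom s -> is_derive FF s (MM c 1 s + c).
Proof.
  intros Hs. generalize (gf_pos s Hs); intros Hg.
  unfold FF.
  assert (H := is_derive_comp ln gf s _ _ (is_derive_ln (gf s) Hg) (gf_derive c s Hs)).
  eapply is_derive_ext; [intros; reflexivity|].
  replace (MM c 1 s + c) with (scal (NN c 1 s + c * gf s) (/ gf s)).
  - exact H.
  - unfold MM, scal; simpl; unfold mult; simpl. field. lra.
Qed.

Lemma Dom_open s : Dom s -> locally s Dom.
Proof.
  unfold Dom. intros Hs. destruct (CV_radius a) as [r| |] eqn:E; simpl in *.
  - assert (Hr : 0 < r) by (generalize (exp_pos s); lra).
    assert (Hl : s < ln r) by (rewrite <- (ln_exp s); apply ln_increasing; auto; apply exp_pos).
    exists (mkposreal (ln r - s) ltac:(lra)). intros y Hy. apply ball_R in Hy. simpl in Hy.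
    rewrite <- (exp_ln r) by auto. apply exp_increasing. apply Rabs_def2 in Hy. change (minus y s) with (y - s) in Hy. lra.
  - apply filter_forall. auto.
  - contradiction.
Qed.

Definition Kc (c : R) (j : nat) (s : R) := Derive_n FF j s - (if Nat.eqb j 1 then c else 0).

Lemma Kc1 c s : Dom s -> Kc c 1 s = MM c 1 s.
Proof.
  intros Hs. unfold Kc.
  assert (E : Derive_n FF 1 s = MM c 1 s + c).
  { simpl. apply is_derive_unique. eapply is_derive_ext; [|apply (FF_derive c s Hs)]. intros; reflexivity. }
  rewrite E. simpl. ring.
Qed.

Lemma Kc_der c j s : Dom s -> ex_derive (Kc c (S j)) s -> is_derive (Kc c (S j)) s (Kc c (S (S j)) s).
Proof.
  intros Hs [l Hl]. unfold Kc in *.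
  assert (H1 : is_derive (Derive_n FF (S j)) s (l + 0)).
  { apply (is_derive_ext (fun s => (Derive_n FF (S j) s - (if Nat.eqb (S j) 1 then c else 0)) + (if Nat.eqb (S j) 1 then c else 0))).
    { intros t. simpl. ring. }
    apply is_derive_plus'; auto. apply (is_derive_const (K:=R_AbsRing) (V:=R_NormedModule)). }
  apply is_derive_unique in H1 as H2.
  simpl Nat.eqb at 2. rewrite Rminus_0_r.
  change (Derive_n FF (S (S j)) s) with (Derive (Derive_n FF (S j)) s). rewrite H2.
  replace (l + 0) with (l - 0) by ring.
  apply is_derive_minus'; [rewrite Rplus_0_r in H1; exact H1|apply (is_derive_const (K:=R_AbsRing) (V:=R_NormedModule))].
Qed.

Lemma ident_all c p s : Dom s -> ident (MM c) (Kc c) p s.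
Proof.
  intros Hs. apply (cumul_main Dom Dom_open (MM c) (Kc c)); auto.
  - intros; apply MM0; auto.
  - intros; apply MM_derive; auto.
  - intros; apply Kc1; auto.
  - intros; apply Kc_der; auto.
Qed.
End Fam.

Lemma left_to_filter L : Filter (left_to L).
Proof. destruct L; simpl; [apply at_left_proper_filter|apply Rbar_locally_filter|apply Rbar_locally_filter]. Qed.

Lemma at_left_map (f : R -> R) x : continuous f x -> (forall y, y < x -> f y < f x) ->
  filterlim f (at_left x) (at_left (f x)).
Proof.
  intros Hc Hm P HP. unfold filtermap. unfold at_left, within in *.
  generalize (Hc _ HP). unfold filtermap. apply filter_imp. intros y Hy Hyx. apply Hy. apply Hm; auto.
Qed.

Lemma exp_at_left r : filterlim exp (at_left r) (at_left (exp r)).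
Proof.
  apply at_left_map.
  - apply exd_cont. auto_derive. auto.
  - intros; apply exp_increasing; auto.
Qed.

Lemma ln_at_left r : 0 < r -> filterlim ln (at_left r) (at_left (ln r)).
Proof.
  intros Hr P HP. unfold filtermap, at_left, within in *.
  assert (Hc : continuous ln r) by (apply exd_cont; auto_derive; auto).
  assert (H1 : locally r (fun y => ln y < ln r -> P (ln y))) by exact (Hc _ HP).
  generalize (filter_and _ _ H1 (locally_interval (fun y => 0 < y) r 0 p_infty Hr I (fun y H1 H2 => H1))).
  apply filter_imp. intros y [Hy Hpos] Hyr. apply Hy. apply ln_increasing; auto.
Qed.

Section Main.
Variable a : nat -> R.
Hypothesis Ha_nonneg : forall k, 0 <= a k.
Hypothesis Ha0 : 0 < a 0%nat.
Hypothesis Hnonconst : exists k, (1 <= k)%nat /\ a k <> 0.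
Hypothesis HR : Rbar_lt 0 (CV_radius a).

Let Ft := left_to (CV_radius a).
Let Fs := left_to (Rbar_ln (CV_radius a)).

Lemma Fs_filter : Filter Fs.
Proof. apply left_to_filter. Qed.
Lemma Ft_filter : Filter Ft.
Proof. apply left_to_filter. Qed.

Lemma Fs_Dom : Fs (Dom a).
Proof.
  unfold Fs, Dom. destruct (CV_radius a) as [r| |] eqn:E; simpl in *.
  - unfold at_left, within. apply filter_forall. intros y Hy.
    rewrite <- (exp_ln r) by auto. apply exp_increasing; auto.
  - exists 0. intros; simpl; auto.
  - contradiction.
Qed.

Lemma exp_Fs_Ft : filterlim exp Fs Ft.
Proof.
  unfold Fs, Ft. destruct (CV_radius a) as [r| |] eqn:E; simpl in *.
  - rewrite <- (exp_ln r) at 2 by auto. apply exp_at_left.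
  - intros P [M HM]. exists M. intros x Hx. apply HM.
    generalize (exp_ineq1_le x); lra.
  - contradiction.
Qed.

Lemma ln_Ft_Fs : filterlim ln Ft Fs.
Proof.
  unfold Fs, Ft. destruct (CV_radius a) as [r| |] eqn:E; simpl in *.
  - apply ln_at_left; auto.
  - intros P [M HM]. exists (exp M). intros x Hx. apply HM.
    rewrite <- (ln_exp M). apply ln_increasing; auto. apply exp_pos.
  - contradiction.
Qed.

Lemma Ft_pos : Ft (fun t => 0 < t).
Proof.
  unfold Ft. destruct (CV_radius a) as [r| |] eqn:E; simpl in *.
  - unfold at_left, within. generalize (locally_interval (fun y => 0 < y) r 0 p_infty HR I (fun y H1 H2 => H1)).
    apply filter_imp. intros; tauto.
  - exists 0. auto.
  - contradiction.
Qed.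

Lemma khin_series (h : nat -> R) s : Dom a s ->
  Series (fun k => h k * khin_prob a (exp s) k) = Series (fun k => a k * h k * exp s ^ k) / gf a s.
Proof.
  intros Hs. unfold khin_prob, Rdiv. rewrite <- Series_scal_r. apply Series_ext. intros k.
  unfold gf. ring.
Qed.

Lemma khin_MM c j s : Dom a s ->
  Series (fun k => (INR k - c) ^ j * khin_prob a (exp s) k) = MM a c j s.
Proof. intros Hs. rewrite khin_series by auto. unfold MM, NN, PSeries, bc. reflexivity. Qed.

Definition ms s := MM a 0 1 s.

Lemma mean_eq s : Dom a s -> khin_mean a (exp s) = ms s.
Proof.
  intros Hs. unfold khin_mean, ms. rewrite <- (khin_MM 0 1 s Hs). apply Series_ext; intros; ring.
Qed.

Lemma DF1 c s : Dom a s -> Derive_n (FF a) 1 s = MM a c 1 s + c.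
Proof.
  intros Hs. simpl. apply is_derive_unique. eapply is_derive_ext; [|apply (FF_derive a Ha_nonneg Ha0 c s Hs)]. intros; reflexivity.
Qed.

Lemma Kc1_zero s : Dom a s -> Kc a (ms s) 1 s = 0.
Proof. intros Hs. unfold Kc. rewrite (DF1 0 s Hs). simpl Nat.eqb. cbv iota. unfold ms. ring. Qed.

Lemma var_F2 s : Dom a s -> MM a (ms s) 2 s = Derive_n (FF a) 2 s.
Proof.
  intros Hs. assert (H := ident_all a Ha_nonneg Ha0 (ms s) 1 s Hs). unfold ident in H.
  rewrite H. simpl. rewrite <- (Kc1 a Ha_nonneg Ha0 (ms s) s Hs), Kc1_zero by auto.
  rewrite MM0 by auto. unfold Kc. simpl. rewrite C_n_n. ring.
Qed.

Lemma NN_ge_term c j s k0 : Dom a s -> (forall k, 0 <= bc a c j k) -> bc a c j k0 * exp s ^ k0 <= NN a c j s.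
Proof.
  intros Hs Hb. unfold NN, PSeries.
  apply (series_ge_term (fun k => bc a c j k * exp s ^ k) k0).
  - intros k. apply Rmult_le_pos; auto. apply pow_le, Rlt_le, exp_pos.
  - assert (H := CV_radius_inside (bc a c j) (exp s) (Dom_bc a c j s Hs)). unfold ex_pseries in H.
    destruct H as [l Hl].
    exists l. apply is_series_ext with (2 := Hl). intros n. unfold scal; simpl; unfold mult; simpl.
    rewrite pow_n_pow. ring.
Qed.

Lemma F2_pos s : Dom a s -> 0 < Derive_n (FF a) 2 s.
Proof.
  intros Hs. rewrite <- var_F2 by auto. unfold MM.
  apply Rdiv_lt_0_compat; [|apply gf_pos; auto].
  assert (Hb : forall k, 0 <= bc a (ms s) 2 k) by (intros; unfold bc; apply Rmult_le_pos; auto; apply pow2_ge_0).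
  destruct Hnonconst as (k & Hk & Hak).
  assert (Hak' : 0 < a k) by (generalize (Ha_nonneg k); lra).
  destruct (Req_dec (ms s) 0) as [E|E].
  - apply Rlt_le_trans with (bc a (ms s) 2 k * exp s ^ k); [|apply NN_ge_term; auto].
    unfold bc. rewrite E. apply Rmult_lt_0_compat; [|apply pow_lt, exp_pos].
    apply Rmult_lt_0_compat; auto. apply pow_lt. rewrite Rminus_0_r. apply lt_0_INR; lia.
  - apply Rlt_le_trans with (bc a (ms s) 2 0 * exp s ^ 0); [|apply NN_ge_term; auto].
    unfold bc. simpl. rewrite Rminus_0_l. apply Rmult_lt_0_compat; [|lra].
    apply Rmult_lt_0_compat; auto. nra.
Qed.

Definition sigf s := sqrt (Derive_n (FF a) 2 s).
Definition nu (j : nat) (s : R) := khin_norm_moment a (exp s) j.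
Definition la (j : nat) (s : R) := Kc a (ms s) j s / sigf s ^ j.

Lemma sigf_pos s : Dom a s -> 0 < sigf s.
Proof. intros Hs. unfold sigf. apply sqrt_lt_R0, F2_pos; auto. Qed.

Lemma nu_eq j s : Dom a s -> nu j s = MM a (ms s) j s / sigf s ^ j.
Proof.
  intros Hs. unfold nu, khin_norm_moment.
  assert (Hsig : khin_sigma a (exp s) = sigf s).
  { unfold khin_sigma, khin_var, sigf. f_equal. rewrite mean_eq by auto. rewrite khin_MM by auto. apply var_F2; auto. }
  rewrite Hsig, mean_eq by auto. generalize (sigf_pos s Hs); intros Hp.
  unfold Rdiv. rewrite <- (khin_MM (ms s) j s Hs), <- Series_scal_r. apply Series_ext. intros k.
  rewrite Rpow_mult_distr, pow_inv. ring.
Qed.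

Lemma Hev_main : Fs (fun s => nu 0 s = 1 /\ la 1%nat s = 0 /\ la 2%nat s = 1 /\
   forall p, nu (S p) s = sm (fun i => Binomial.C p i * la (S i) s * nu (p - i)%nat s) (S p)).
Proof.
  assert (FFs := Fs_filter). generalize Fs_Dom. apply filter_imp.
  intros s Hs. generalize (sigf_pos s Hs); intros Hp.
  split; [|split; [|split]].
  - rewrite nu_eq, MM0 by auto. simpl. field.
  - unfold la. rewrite Kc1_zero by auto. unfold Rdiv; ring.
  - unfold la. unfold Kc. simpl Nat.eqb. cbv iota. rewrite Rminus_0_r.
    unfold sigf. rewrite <- Rsqr_pow2, Rsqr_sqrt by (apply Rlt_le, F2_pos; auto). field.
    apply Rgt_not_eq, F2_pos; auto.
  - intros p. rewrite nu_eq by auto.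
    rewrite (ident_all a Ha_nonneg Ha0 (ms s) p s Hs).
    unfold Rdiv. rewrite Rmult_comm, <- sm_scal. apply sm_ext. intros i Hi.
    rewrite nu_eq by auto. unfold la.
    replace (S p) with (S i + (p - i))%nat at 1 by lia. rewrite pow_add.
    field. split; apply pow_nonzero; lra.
Qed.

Lemma target_eq j s : (3 <= j)%nat -> Dom a s ->
  Derive_n (fulcrum a) j s / Rpower (Derive_n (fulcrum a) 2 s) (INR j / 2) = la j s.
Proof.
  intros Hj Hs. unfold la, Kc.
  replace (Nat.eqb j 1) with false by (symmetry; apply Nat.eqb_neq; lia). rewrite Rminus_0_r.
  change (fulcrum a) with (FF a).
  f_equal. unfold sigf. rewrite <- Rpower_sqrt by (apply F2_pos; auto).
  rewrite <- Rpower_pow by (apply exp_pos).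
  rewrite Rpower_mult. f_equal. field.
Qed.


Lemma nm_eq j : normal_moment j = mj j.
Proof. unfold normal_moment. apply normal_moment_val. Qed.

Theorem main_equiv n : (3 <= n)%nat ->
  (forall j : nat, (3 <= j <= n)%nat ->
     filterlim (fun t => khin_norm_moment a t j) (left_to (CV_radius a))
       (locally (normal_moment j)))
  <->
  (forall j : nat, (3 <= j <= n)%nat ->
     filterlim (fun s => Derive_n (fulcrum a) j s
                         / Rpower (Derive_n (fulcrum a) 2 s) (INR j / 2))
       (left_to (Rbar_ln (CV_radius a))) (locally 0)).
Proof.
  intros Hn.
  assert (FFs := Fs_filter). assert (FFt := Ft_filter).
  assert (Habs := abstract_equiv (F:=Fs) nu la mj eq_refl eq_refl (fun j => eq_refl) Hev_main n Hn).
  split; intros H.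
  - intros j Hj. apply (lim_ext_ev (F:=Fs) (la j)).
    { generalize Fs_Dom; apply filter_imp; intros s Hs; symmetry; apply target_eq; auto; lia. }
    apply Habs; auto. intros j' Hj'. specialize (H j' Hj'). rewrite nm_eq in H.
    apply (filterlim_comp _ _ _ exp (fun t => khin_norm_moment a t j') Fs Ft); [apply exp_Fs_Ft|exact H].
  - intros j Hj. rewrite nm_eq.
    assert (Hnu : filterlim (nu j) Fs (locally (mj j))).
    { apply Habs; auto. intros j' Hj'.
      apply (lim_ext_ev (F:=Fs) (fun s => Derive_n (fulcrum a) j' s / Rpower (Derive_n (fulcrum a) 2 s) (INR j' / 2))).
      { generalize Fs_Dom; apply filter_imp; intros s Hs; apply target_eq; auto; lia. }
      apply H; auto. }
    apply (lim_ext_ev (F:=Ft) (fun t => nu j (ln t))).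
    { generalize Ft_pos; apply filter_imp; intros t Ht. unfold nu. rewrite exp_ln; auto. }
    apply (filterlim_comp _ _ _ ln (nu j) Ft Fs); [apply ln_Ft_Fs|exact Hnu].
Qed.
End Main.


Theorem theorem2p4 (a : nat -> R)
  (Ha_nonneg : forall k, 0 <= a k) (Ha0 : 0 < a 0%nat)
  (Hnonconst : exists k, (1 <= k)%nat /\ a k <> 0)
  (HR : Rbar_lt 0 (CV_radius a))
  (n : nat) (Hn : (3 <= n)%nat) :
  (forall j : nat, (3 <= j <= n)%nat ->
     filterlim (fun t => khin_norm_moment a t j) (left_to (CV_radius a))
       (locally (normal_moment j)))
  <->
  (forall j : nat, (3 <= j <= n)%nat ->
     filterlim (fun s => Derive_n (fulcrum a) j s
                         / Rpower (Derive_n (fulcrum a) 2 s) (INR j / 2))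
       (left_to (Rbar_ln (CV_radius a))) (locally 0)).
Proof.
  apply main_equiv; auto.
Qed.
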